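(* Let $\mathcal{M}$ be a separable metric space, $f:\mathcal{M}\to\mathcal{M}$ a continuous bijection with continuous inverse, $\mathcal{X}\subseteq\mathcal{M}$ forward invariant under $f$, $\mathcal{Z}$ a separable metric space, $g:\mathcal{Z}\to\mathcal{Z}$ a continuous bijection with continuous inverse, and $F:\mathcal{X}\to\mathcal{Z}$ continuous with $F\circ f=g\circ F$ on $\mathcal{X}$. For any $\xi\in\mathcal{X}$, if the trajectory through $\xi$ is backward precompact in $\mathcal{X}$, then $F(\xi)\in D^-_{\mathcal{Z}}(F(\alpha_{\mathcal{X}}(\xi)))$.
   Context: $\alpha_{\mathcal{X}}(\xi)$ is the set of $x\in\mathcal{X}$ such that $f^{-k_j}(\xi)\to x$ for some indices $k_j\to\infty$ ($f^{-k}$ the $k$-th iterate of $f^{-1}$); $\alpha_{\mathcal{Z}}(\zeta)$ is defined analogously with $g^{-1}$. $D^-_{\mathcal{Z}}(\Gamma)=\{\zeta\in\mathcal{Z}\mid\alpha_{\mathcal{Z}}(\zeta)=\Gamma\}$. The trajectory through $\xi$ is backward precompact in $\mathcal{X}$ if the closure in $\mathcal{X}$ of $\{f^{-k}(\xi)\mid k\in\mathbb{N}\}$ is compact. *)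

(* Defs.v *)
From HB Require Import structures.
From mathcomp Require Import all_boot all_order all_algebra.
From mathcomp Require Import all_classical all_reals all_analysis.
Set Implicit Arguments. Unset Strict Implicit. Unset Printing Implicit Defensive.
Import Order.TTheory GRing.Theory Num.Theory.
Local Open Scope classical_set_scope.

Definition separable (T : topologicalType) : Prop :=
  exists D : set T, countable D /\ dense D.

Definition homeo_with (T : topologicalType) (f finv : T -> T) : Prop :=
  [/\ continuous f, continuous finv, cancel f finv & cancel finv f].

(* alpha-limit set relative to a subset X (X = setT for the whole space):
   points x of X such that finv^k_j xi --> x for some k_j --> oo
   (k_j given by a strictly increasing sequence of indices). *)
Definition alpha_lim (T : topologicalType) (X : set T) (finv : T -> T) (xi : T)
  : set T :=
  [set x | X x /\ exists phi : nat -> nat, {homo phi : n m / (n < m)%N} /\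
      (fun j => iter (phi j) finv xi) @ \oo --> x].

Definition Dminus (T : topologicalType) (ginv : T -> T) (Gamma : set T) : set T :=
  [set z | alpha_lim setT ginv z = Gamma].

(* The backward trajectory through xi lies in X and its closure in X
   (i.e. closure in T intersected with X, the subspace closure) is compact. *)
Definition backward_precompact (T : topologicalType) (X : set T)
  (finv : T -> T) (xi : T) : Prop :=
  let O := [set iter k finv xi | k in setT] in
  O `<=` X /\ compact (closure O `&` X).

(* Main.v *)
Require Import Defs.
From HB Require Import structures.
From mathcomp Require Import all_boot all_order all_algebra.
From mathcomp Require Import all_classical all_reals all_analysis.
Import Order.TTheory GRing.Theory Num.Theory.
Local Open Scope classical_set_scope.

Lemma subseq_cvg (T : topologicalType) (v : nat -> T) (psi : nat -> nat) (z : T) :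
  (forall n, (n <= psi n)%N) -> v @ \oo --> z -> (v \o psi) @ \oo --> z.
Proof.
move=> hpsi hv.
have hp : psi @ \oo --> \oo.
  apply/cvgnyPge => A; near=> n; apply: leq_trans (hpsi n); near: n.
  exact: nbhs_infty_ge.
exact: cvg_comp hp hv.
Unshelve. all: end_near. Qed.

Lemma within_seq (T U : topologicalType) (X : set T) (F : T -> U) (u : nat -> T) (x : T) :
  {within X, continuous F} -> X x -> (forall n, X (u n)) ->
  u @ \oo --> x -> (F \o u) @ \oo --> F x.
Proof.
move=> /subspace_continuousP hF Xx Xu hu.
have hw : u @ \oo --> within X (nbhs x).
  move=> W /= hW.
  have h1 : \forall n \near \oo, X (u n) -> W (u n) := hu _ hW.
  change (\forall n \near \oo, W (u n)).
  by apply: filterS h1 => n h; exact: h (Xu n).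
exact: cvg_comp hw (hF x Xx).
Qed.

Lemma cluster_subseq (R : realType) (T : pseudoMetricType R) (u : nat -> T) (x : T) :
  cluster (u @ \oo) x ->
  exists psi : nat -> nat, (forall n, (psi n < psi n.+1)%N) /\ (u \o psi) @ \oo --> x.
Proof.
move=> hc.
have hk : forall N k : nat, exists n, (N <= n)%N /\ ball x (k.+1%:R^-1)%R (u n).
  move=> N k.
  have := hc [set y | exists n, (N <= n)%N /\ y = u n] (ball x (k.+1%:R^-1)%R).
  case.
  - by exists N => // n /= Nn; exists n.
  - by apply: nbhsx_ballx; rewrite invr_gt0 ltr0n.
  by move=> y [[n [Nn ->]] hb]; exists n; split => //; exact: ball_sym.
have [c hcP] : exists c : nat -> nat -> nat, forall N k, (N <= c N k)%N /\ ball x (k.+1%:R^-1)%R (u (c N k)).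
  exists (fun N k => projT1 (cid (hk N k))) => N k; exact: projT2 (cid (hk N k)).
pose psi := fix psi k := match k with 0 => c 0%N 0%N | k'.+1 => c (psi k').+1 k'.+1 end.
exists psi; split.
  by move=> n /=; case: (hcP (psi n).+1 n.+1).
have hb : forall k, ball x (k.+1%:R^-1)%R (u (psi k)).
  by case => [|k] /=; [case: (hcP 0%N 0%N)|case: (hcP (psi k).+1 k.+1)].
apply/cvg_ballP => e e0.
near=> k.
apply: (@le_ball _ _ _ (k.+1%:R^-1)%R).
  apply/ltW; near: k; exact: (near_infty_natSinv_lt (PosNum e0)).
exact: hb.
Unshelve. all: end_near. Qed.

Arguments within_seq {T U X F u x}.
Arguments subseq_cvg {T v psi z}.
Arguments cluster_subseq {R T u x}.

Theorem corollary27 (R : realType) (M Z : metricType R)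
  (f finv : M -> M) (g ginv : Z -> Z) (X : set M) (F : M -> Z) (xi : M) :
  separable M -> separable Z ->
  homeo_with f finv -> homeo_with g ginv ->
  f @` X `<=` X ->
  {within X, continuous F} ->
  (forall x, X x -> F (f x) = g (F x)) ->
  X xi ->
  backward_precompact X finv xi ->
  Dminus ginv (F @` alpha_lim X finv xi) (F xi).
Proof.
move=> _ _ [cf cfi fK fiK] [cg cgi gK giK] fX cF Fcomm Xxi [OX cK].
have Xu : forall k, X (iter k finv xi) by move=> k; apply: OX; exists k.
have Fu : forall k, F (iter k finv xi) = iter k ginv (F xi).
  elim => // k IH /=; rewrite -IH.
  have := Fcomm _ (Xu k.+1); rewrite /= fiK => ->.
  by rewrite gK.
have Fphi : forall phi : nat -> nat,
    (fun j => iter (phi j) ginv (F xi)) = F \o (fun j => iter (phi j) finv xi).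
  by move=> phi; apply/funext => j /=; rewrite Fu.
rewrite /Dminus /=; apply/seteqP; split.
- move=> z [_ [phi [phim hz]]].
  pose v := fun j => iter (phi j) finv xi.
  have hGK : (v @ \oo) (closure [set iter k finv xi | k in setT] `&` X).
    have : \forall j \near \oo, (closure [set iter k finv xi | k in setT] `&` X) (v j).
      apply: nearW => j; split; last exact: Xu.
      by apply: subset_closure; exists (phi j).
    by [].
  have [x [Kx clx]] := cK (v @ \oo) _ hGK.
  have [psi [psim hpsi]] := cluster_subseq clx.
  have Xx : X x by case: Kx.
  have psige : forall n, (n <= psi n)%N.
    by elim => // n IH; exact: leq_ltn_trans IH (psim n).
  have h1 := within_seq cF Xx (fun n => Xu _) hpsi.
  have h2 := subseq_cvg psige hz.
  rewrite Fphi in h2.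
  have -> : z = F x.
    exact: (cvg_unique (@metric_hausdorff R Z) h2 h1).
  exists x => //; split => //; exists (phi \o psi); split => //.
  apply: homo_ltn; first exact: ltn_trans.
  by move=> i /=; apply: phim; exact: psim.
- move=> _ [x [Xx [phi [phim hx]]] <-]; split => //; exists phi; split => //.
  rewrite Fphi; exact: within_seq cF Xx (fun n => Xu _) hx.
Qed.
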